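(* Let $k$ be a commutative ring, $P,P'$ invertible $k$-modules, $Q'=P'^*$. Let $A$ be a $P$-Frobenius $k$-algebra and $B$ a $P'$-Frobenius $k$-algebra such that $B$ is a subalgebra of $A$, $A_B$ is a finitely generated projective right $B$-module, and some Nakayama automorphism $\nu_A$ of $A$ satisfies $\nu_A(B)=B$. Let $\nu_B$ be a Nakayama automorphism of $B$ and $\beta=\nu_B\circ\nu_A^{-1}$ (restricted to $B$). Then $A$ is a $W$-Frobenius extension of $B$, where $W={}_\beta B\otimes_kQ'\otimes_kP$.
   Context: For an invertible (finitely generated projective rank-one) $k$-module $P$, a $k$-algebra $A$ is $P$-Frobenius if it is finitely generated projective over $k$ and $A_A\cong\mathrm{Hom}_k(A,P)_A$ as right $A$-modules, where $\mathrm{Hom}_k(A,P)$ is an $A$-bimodule via $(bfc)(a)=f(cab)$. A Frobenius homomorphism is $\phi\in\mathrm{Hom}_k(A,P)$ such that $a\mapsto\phi a$ is such an isomorphism; its Nakayama automorphism is the algebra automorphism $\nu$ with $a\phi=\phi\nu(a)$, i.e. $\phi(xa)=\phi(\nu(a)x)$ for all $a,x$; a Nakayama automorphism of $A$ is one arising from some Frobenius homomorphism. ${}_\beta B$ denotes $B$ with right regular action and left action $b\cdot x=\beta(b)x$; $W$ is a $B$-bimodule via its first factor. For a subring $B\subseteq A$ and an invertible $B$-bimodule $W$, $A$ is a $W$-Frobenius extension of $B$ if $A_B$ is finitely generated projective and ${}_BA_A\cong{}_B\mathrm{Hom}_B(A_B,W_B)_A$, where $(bfa)(x)=bf(ax)$.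 *)

(* Defs.v *)
From HB Require Import structures.
From mathcomp Require Import all_boot all_order all_algebra.
Set Implicit Arguments. Unset Strict Implicit. Unset Printing Implicit Defensive.
Import GRing.Theory.
Local Open Scope ring_scope.

Section Frobenius.
Variable k : comPzRingType.

Definition klin (M N : lmodType k) (f : M -> N) : Prop :=
  forall (r : k) (u v : M), f (r *: u + v) = r *: f u + f v.

Definition kbilin (M N X : lmodType k) (g : M -> N -> X) : Prop :=
  (forall m, klin (g m)) /\ (forall n, klin (fun m => g m n)).

Definition ktrilin (M N O X : lmodType k) (g : M -> N -> O -> X) : Prop :=
  (forall n o, klin (fun m => g m n o)) /\
  (forall m o, klin (fun n => g m n o)) /\
  (forall m n, klin (g m n)).

Definition is_tensor2 (M N T : lmodType k) (t : M -> N -> T) : Prop :=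
  kbilin t /\
  forall (X : lmodType k) (g : M -> N -> X), kbilin g ->
    (exists h : T -> X, klin h /\ forall m n, h (t m n) = g m n) /\
    (forall h h' : T -> X, klin h -> klin h' ->
       (forall m n, h (t m n) = g m n) -> (forall m n, h' (t m n) = g m n) ->
       forall x, h x = h' x).

Definition is_tensor3 (M N O T : lmodType k) (t : M -> N -> O -> T) : Prop :=
  ktrilin t /\
  forall (X : lmodType k) (g : M -> N -> O -> X), ktrilin g ->
    (exists h : T -> X, klin h /\ forall m n o, h (t m n o) = g m n o) /\
    (forall h h' : T -> X, klin h -> klin h' ->
       (forall m n o, h (t m n o) = g m n o) ->
       (forall m n o, h' (t m n o) = g m n o) ->
       forall x, h x = h' x).

(* P is an invertible k-module: P (x)_k Q ~= k for some k-module Q,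
   i.e. some bilinear pairing P x Q -> k is a universal bilinear map. *)
Definition invertible_kmod (P : lmodType k) : Prop :=
  exists (Q : lmodType k) (m : P -> Q -> k^o), is_tensor2 m.

Definition is_dual (P Q : lmodType k) (ev : Q -> P -> k^o) : Prop :=
  kbilin ev /\
  (forall q q', (forall p, ev q p = ev q' p) -> q = q') /\
  (forall f : P -> k^o, klin f -> exists q, forall p, f p = ev q p).

(* finitely generated projective k-module: a direct summand of k^n. *)
Definition fgproj_k (M : lmodType k) : Prop :=
  exists (n : nat) (e : M -> 'I_n -> k) (g : ('I_n -> k) -> M),
    (forall r u v i, e (r *: u + v) i = r * e u i + e v i) /\
    (forall r u v, g (fun i => r * u i + v i) = r *: g u + g v) /\
    (forall m, g (e m) = m).

Definition kalg_mor (A B : algType k) (f : A -> B) : Prop :=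
  klin f /\ (forall x y, f (x * y) = f x * f y) /\ f 1 = 1.

Definition kalg_aut (A : algType k) (f : A -> A) : Prop :=
  kalg_mor f /\ bijective f.

(* A is P-Frobenius: A f.g. projective over k and A_A ~= Hom_k(A,P)_A,
   where (f c)(x) = f (c x). *)
Definition P_Frobenius (A : algType k) (P : lmodType k) : Prop :=
  fgproj_k A /\
  exists Phi : A -> A -> P,
    (forall a, klin (Phi a)) /\
    (forall a a' x, Phi (a + a') x = Phi a x + Phi a' x) /\
    (forall a c x, Phi (a * c) x = Phi a (c * x)) /\
    (forall a a', (forall x, Phi a x = Phi a' x) -> a = a') /\
    (forall f : A -> P, klin f -> exists a, forall x, f x = Phi a x).

(* Frobenius homomorphism: a |-> phi a (with (phi a)(x) = phi (a x))
   is an isomorphism A -> Hom_k(A,P). *)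
Definition frob_hom (A : algType k) (P : lmodType k) (phi : A -> P) : Prop :=
  klin phi /\
  (forall a a', (forall x, phi (a * x) = phi (a' * x)) -> a = a') /\
  (forall f : A -> P, klin f -> exists a, forall x, f x = phi (a * x)).

Definition nakayama_of (A : algType k) (P : lmodType k) (phi : A -> P)
  (nu : A -> A) : Prop :=
  kalg_aut nu /\ forall a x, phi (x * a) = phi (nu a * x).

Definition nakayama_aut (A : algType k) (P : lmodType k) (nu : A -> A) : Prop :=
  exists phi : A -> P, frob_hom phi /\ nakayama_of phi nu.

(* Given an injective algebra map iota : B -> A (B a subalgebra of A),
   A_B is a finitely generated projective right B-module: a direct summand
   of B^n as right B-modules. *)
Definition fgproj_right (B A : algType k) (iota : B -> A) : Prop :=
  exists (n : nat) (e : A -> 'I_n -> B) (g : ('I_n -> B) -> A),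
    (forall u v i, e (u + v) i = e u i + e v i) /\
    (forall u b i, e (u * iota b) i = e u i * b) /\
    (forall u v, g (fun i => u i + v i) = g u + g v) /\
    (forall u b, g (fun i => u i * b) = g u * iota b) /\
    (forall a, g (e a) = a).

(* A is a W-Frobenius extension of B (via iota : B -> A), where W is a
   B-bimodule with left action lW and right action rW:
   A_B f.g. projective and  B A_A ~= B Hom_B(A_B, W_B)_A,
   with (b f a)(x) = b . f (a x). *)
Definition W_Frobenius_ext (B A : algType k) (iota : B -> A) (W : lmodType k)
  (lW : B -> W -> W) (rW : W -> B -> W) : Prop :=
  fgproj_right iota /\
  exists Psi : A -> A -> W,
    (forall a x y, Psi a (x + y) = Psi a x + Psi a y) /\
    (forall a x b, Psi a (x * iota b) = rW (Psi a x) b) /\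
    (forall a a' x, Psi (a + a') x = Psi a x + Psi a' x) /\
    (forall b a x, Psi (iota b * a) x = lW b (Psi a x)) /\
    (forall a c x, Psi (a * c) x = Psi a (c * x)) /\
    (forall a a', (forall x, Psi a x = Psi a' x) -> a = a') /\
    (forall f : A -> W, (forall x y, f (x + y) = f x + f y) ->
       (forall x b, f (x * iota b) = rW (f x) b) ->
       exists a, forall x, f x = Psi a x).

End Frobenius.

(* Main.v *)
Require Import Defs.
From HB Require Import structures.
From mathcomp Require Import all_boot all_order all_algebra.
From mathcomp Require Import boolp.
Set Implicit Arguments. Unset Strict Implicit. Unset Printing Implicit Defensive.
Import GRing.Theory.
Local Open Scope ring_scope.


Record subm (k : comPzRingType) (T : lmodType k) := Subm {
  sm :> T -> Prop;
  sm0 : sm 0;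
  smD : forall x y, sm x -> sm y -> sm (x + y);
  smZ : forall (r : k) x, sm x -> sm (r *: x) }.

Definition qcls (k : comPzRingType) (T : lmodType k) (M : subm T) (x : T) : T -> Prop :=
  fun y => M (y - x).

Definition quot (k : comPzRingType) (T : lmodType k) (M : subm T) :=
  {C : T -> Prop | exists x, C = qcls M x}.

HB.instance Definition _ (k : comPzRingType) (T : lmodType k) (M : subm T) := gen_eqMixin (@quot k T M).
HB.instance Definition _ (k : comPzRingType) (T : lmodType k) (M : subm T) := gen_choiceMixin (@quot k T M).

Definition qpi (k : comPzRingType) (T : lmodType k) (M : subm T) (x : T) : quot M :=
  exist _ (qcls M x) (ex_intro _ x erefl).

Lemma smN (k : comPzRingType) (T : lmodType k) (M : subm T) x : M x -> M (- x).
Proof. by move=> h; rewrite -scaleN1r; apply: smZ. Qed.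

Lemma smB (k : comPzRingType) (T : lmodType k) (M : subm T) x y : M x -> M y -> M (x - y).
Proof. by move=> hx hy; apply: smD => //; apply: smN. Qed.

Lemma qpi_eq (k : comPzRingType) (T : lmodType k) (M : subm T) x y :
  qpi M x = qpi M y <-> M (x - y).
Proof.
split.
  move=> /(congr1 (@proj1_sig _ _)) /= e.
  have : qcls M x x by rewrite /qcls subrr; apply: sm0.
  by rewrite e.
move=> h; apply: eq_sig_hprop => [C p q|/=]; first exact: Prop_irrelevance.
apply: funext => z; apply: propext; rewrite /qcls; split=> hz.
  have -> : z - y = (z - x) + (x - y) by rewrite addrA subrK.
  exact: smD.
have -> : z - x = (z - y) - (x - y) by rewrite opprB addrA subrK.
exact: smB.
Qed.

Lemma qpi_surj (k : comPzRingType) (T : lmodType k) (M : subm T) (c : quot M) :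
  exists x, c = qpi M x.
Proof.
case: c => C [x e]; exists x; subst C.
by apply: eq_sig_hprop => [C p q|//]; exact: Prop_irrelevance.
Qed.

Definition qrepr (k : comPzRingType) (T : lmodType k) (M : subm T) (c : quot M) : T :=
  projT1 (cid (qpi_surj c)).

Lemma qreprK (k : comPzRingType) (T : lmodType k) (M : subm T) (c : quot M) : qpi M (qrepr c) = c.
Proof. by rewrite /qrepr; case: cid => x /= ->. Qed.

Lemma qrepr_pi (k : comPzRingType) (T : lmodType k) (M : subm T) x : M (qrepr (qpi M x) - x).
Proof. by apply/qpi_eq; rewrite qreprK. Qed.

Definition qadd (k : comPzRingType) (T : lmodType k) (M : subm T) (c d : quot M) :=
  qpi M (qrepr c + qrepr d).
Definition qopp (k : comPzRingType) (T : lmodType k) (M : subm T) (c : quot M) :=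
  qpi M (- qrepr c).
Definition qzero (k : comPzRingType) (T : lmodType k) (M : subm T) := qpi M 0.
Definition qscale (k : comPzRingType) (T : lmodType k) (M : subm T) (r : k) (c : quot M) :=
  qpi M (r *: qrepr c).

Lemma qaddE (k : comPzRingType) (T : lmodType k) (M : subm T) x y :
  qadd (qpi M x) (qpi M y) = qpi M (x + y).
Proof.
apply/qpi_eq.
have -> : qrepr (qpi M x) + qrepr (qpi M y) - (x + y) =
  (qrepr (qpi M x) - x) + (qrepr (qpi M y) - y).
  by rewrite opprD !addrA; congr (_ + _); rewrite -!addrA; congr (_ + _); rewrite addrC.
by apply: smD; apply: qrepr_pi.
Qed.

Lemma qoppE (k : comPzRingType) (T : lmodType k) (M : subm T) x :
  qopp (qpi M x) = qpi M (- x).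
Proof.
apply/qpi_eq; rewrite -opprD; apply: smN; exact: qrepr_pi.
Qed.

Lemma qscaleE (k : comPzRingType) (T : lmodType k) (M : subm T) r x :
  qscale r (qpi M x) = qpi M (r *: x).
Proof.
apply/qpi_eq; rewrite -scalerBr; apply: smZ; exact: qrepr_pi.
Qed.

Ltac qelim := repeat (let c := fresh in move=> c; case: (qpi_surj c) => ? ->).

Lemma qaddA (k : comPzRingType) (T : lmodType k) (M : subm T) : associative (@qadd k T M).
Proof. by qelim; rewrite !qaddE addrA. Qed.
Lemma qaddC (k : comPzRingType) (T : lmodType k) (M : subm T) : commutative (@qadd k T M).
Proof. by qelim; rewrite !qaddE addrC. Qed.
Lemma qadd0 (k : comPzRingType) (T : lmodType k) (M : subm T) : left_id (qzero M) (@qadd k T M).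
Proof. by qelim; rewrite /qzero !qaddE add0r. Qed.
Lemma qaddN (k : comPzRingType) (T : lmodType k) (M : subm T) :
  left_inverse (qzero M) (@qopp k T M) (@qadd k T M).
Proof. by qelim; rewrite qoppE !qaddE addNr. Qed.

HB.instance Definition _ (k : comPzRingType) (T : lmodType k) (M : subm T) :=
  GRing.isZmodule.Build (@quot k T M) (@qaddA k T M) (@qaddC k T M)
    (@qadd0 k T M) (@qaddN k T M).

Lemma qscA (k : comPzRingType) (T : lmodType k) (M : subm T) a b (v : quot M) :
  qscale a (qscale b v) = qscale (a * b) v.
Proof. by move: v; qelim; rewrite !qscaleE scalerA. Qed.
Lemma qsc1 (k : comPzRingType) (T : lmodType k) (M : subm T) : left_id 1 (@qscale k T M).
Proof. by qelim; rewrite !qscaleE scale1r. Qed.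
Lemma qscDr (k : comPzRingType) (T : lmodType k) (M : subm T) :
  right_distributive (@qscale k T M) (@qadd k T M).
Proof. move=> r; qelim; rewrite qaddE !qscaleE. rewrite qaddE scalerDr. by []. Qed.
Lemma qscDl (k : comPzRingType) (T : lmodType k) (M : subm T) (v : quot M) :
  {morph (@qscale k T M)^~ v : a b / a + b >-> qadd a b}.
Proof. by move: v; qelim => a b; rewrite !qscaleE qaddE scalerDl. Qed.

HB.instance Definition _ (k : comPzRingType) (T : lmodType k) (M : subm T) :=
  GRing.Zmodule_isLmodule.Build k (@quot k T M) (@qscA k T M) (@qsc1 k T M)
    (@qscDr k T M) (@qscDl k T M).

Lemma quot_ex (k : comPzRingType) (T : lmodType k) (M : subm T) :
  exists (X : lmodType k) (p : T -> X), klin p /\ forall x, p x = 0 <-> M x.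
Proof.
exists (quot M : lmodType k), (qpi M); split.
  by move=> r u v; rewrite -[RHS]/(qadd (qscale r (qpi M u)) (qpi M v)) qscaleE qaddE.
move=> x; change (qpi M x = qpi M 0 <-> M x); rewrite qpi_eq subr0; done.
Qed.


Lemma klinD (k : comPzRingType) (M N : lmodType k) (f : M -> N) (hf : klin f) x y : f (x + y) = f x + f y.
Proof. by have := hf 1 x y; rewrite !scale1r. Qed.
Lemma klin0 (k : comPzRingType) (M N : lmodType k) (f : M -> N) (hf : klin f) : f 0 = 0.
Proof. by apply: (addrI (f 0)); rewrite addr0 -(klinD hf) addr0. Qed.
Lemma klinZ (k : comPzRingType) (M N : lmodType k) (f : M -> N) (hf : klin f) r x : f (r *: x) = r *: f x.
Proof. by have := hf r x 0; rewrite !addr0 (klin0 hf) addr0. Qed.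
Lemma klinN (k : comPzRingType) (M N : lmodType k) (f : M -> N) (hf : klin f) x : f (- x) = - f x.
Proof. by rewrite -scaleN1r (klinZ hf) scaleN1r. Qed.
Lemma klinB (k : comPzRingType) (M N : lmodType k) (f : M -> N) (hf : klin f) x y : f (x - y) = f x - f y.
Proof. by rewrite (klinD hf) (klinN hf). Qed.
Lemma klin_sum (k : comPzRingType) (M N : lmodType k) (f : M -> N) (hf : klin f) (I : Type) (s : seq I) (F : I -> M) :
  f (\sum_(i <- s) F i) = \sum_(i <- s) f (F i).
Proof.
elim: s => [|a s IH]; first by rewrite !big_nil (klin0 hf).
by rewrite !big_cons (klinD hf) IH.
Qed.

Lemma span3 (k : comPzRingType) (M N O T : lmodType k) (t : M -> N -> O -> T) :
  is_tensor3 t -> forall w, exists s : seq (M * N * O),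
    w = \sum_(u <- s) t u.1.1 u.1.2 u.2.
Proof.
move=> [[t1 [t2 t3]] U].
pose S (w : T) := exists s : seq (M * N * O), w = \sum_(u <- s) t u.1.1 u.1.2 u.2.
have S0 : S 0 by exists [::]; rewrite big_nil.
have SD : forall x y, S x -> S y -> S (x + y).
  by move=> x y [s ->] [s' ->]; exists (s ++ s'); rewrite big_cat.
have SZ : forall (r : k) x, S x -> S (r *: x).
  move=> r x [s ->]; exists [seq (r *: u.1.1, u.1.2, u.2) | u <- s].
  rewrite big_map scaler_sumr; apply: eq_bigr => u _ /=.
  by rewrite (klinZ (t1 _ _)).
have [X [p [pl pE]]] := quot_ex (Subm S0 SD SZ).
have g3 : ktrilin (fun (m : M) (n : N) (o : O) => (0 : X)).
  by split; [|split] => *; move=> r u v; rewrite scaler0 addr0.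
have [_ Uq] := U X _ g3.
have z : klin (fun _ : T => (0 : X)) by move=> r u v; rewrite scaler0 addr0.
move=> w; apply/(pE w).
apply: (Uq p (fun _ => 0) pl z) => // m n o.
apply/(pE (t m n o)); exists [:: (m, n, o)]; by rewrite big_seq1.
Qed.

Lemma span2 (k : comPzRingType) (M N T : lmodType k) (t : M -> N -> T) :
  is_tensor2 t -> forall w, exists s : seq (M * N),
    w = \sum_(u <- s) t u.1 u.2.
Proof.
move=> [[t1 t2] U].
pose S (w : T) := exists s : seq (M * N), w = \sum_(u <- s) t u.1 u.2.
have S0 : S 0 by exists [::]; rewrite big_nil.
have SD : forall x y, S x -> S y -> S (x + y).
  by move=> x y [s ->] [s' ->]; exists (s ++ s'); rewrite big_cat.
have SZ : forall (r : k) x, S x -> S (r *: x).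
  move=> r x [s ->]; exists [seq (r *: u.1, u.2) | u <- s].
  rewrite big_map scaler_sumr; apply: eq_bigr => u _ /=.
  by rewrite (klinZ (t2 _)).
have [X [p [pl pE]]] := quot_ex (Subm S0 SD SZ).
have g2 : kbilin (fun (m : M) (n : N) => (0 : X)).
  by split => *; move=> r u v; rewrite scaler0 addr0.
have [_ Uq] := U X _ g2.
have z : klin (fun _ : T => (0 : X)) by move=> r u v; rewrite scaler0 addr0.
move=> w; apply/(pE w).
apply: (Uq p (fun _ => 0) pl z) => // m n.
apply/(pE (t m n)); exists [:: (m, n)]; by rewrite big_seq1.
Qed.

Lemma morph0 (X Y : zmodType) (F : X -> Y) : {morph F : x y / x + y} -> F 0 = 0.
Proof. by move=> h; apply: (addrI (F 0)); rewrite -h !addr0. Qed.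

Lemma morph_sum (X Y : zmodType) (F : X -> Y) (I : Type) (s : seq I) (G : I -> X) :
  {morph F : x y / x + y} -> F (\sum_(i <- s) G i) = \sum_(i <- s) F (G i).
Proof.
move=> h; elim: s => [|a s IH]; first by rewrite !big_nil (morph0 h).
by rewrite !big_cons h IH.
Qed.

Lemma morphB (X Y : zmodType) (F : X -> Y) : {morph F : x y / x + y} ->
  forall x y, F (x - y) = F x - F y.
Proof.
move=> h x y; apply: (addIr (F y)); rewrite -h subrK addrNK //.
Qed.

Lemma ext3 (k : comPzRingType) (M N O T : lmodType k) (t : M -> N -> O -> T) :
  is_tensor3 t -> forall (X : zmodType) (F G : T -> X),
  {morph F : x y / x + y} -> {morph G : x y / x + y} ->
  (forall m n o, F (t m n o) = G (t m n o)) -> forall w, F w = G w.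
Proof.
move=> t3 X F G hF hG e w; have [s ->] := span3 t3 w.
rewrite (morph_sum _ _ hF) (morph_sum _ _ hG); apply: eq_bigr => u _; exact: e.
Qed.

Lemma fg_decomp (k : comPzRingType) (M : lmodType k) n (e : M -> 'I_n -> k)
  (g : ('I_n -> k) -> M) :
  (forall r u v, g (fun i => r * u i + v i) = r *: g u + g v) ->
  (forall m, g (e m) = m) ->
  forall y, y = \sum_(i < n) e y i *: g (fun j => (i == j)%:R).
Proof.
move=> hg he y.
have g0 : g (fun _ => 0) = 0.
  have := hg 1 (fun _ => 0) (fun _ => 0).
  have -> : (fun i : 'I_n => 1 * (fun _ => (0:k)) i + (fun _ => 0) i) = (fun _ => 0).
    by apply: funext => i; rewrite mul1r addr0.
  by rewrite scale1r => h; apply: (addIr (g (fun _ => 0))); rewrite add0r -h.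
have gZ : forall r u, g (fun i => r * u i) = r *: g u.
  move=> r u; have := hg r u (fun _ => 0); rewrite g0 addr0 => <-.
  by congr g; apply: funext => i; rewrite addr0.
have gS : forall (s : seq 'I_n) (F : 'I_n -> 'I_n -> k),
    g (fun j => \sum_(i <- s) F i j) = \sum_(i <- s) g (F i).
  move=> s F; elim: s => [|a s IH].
    rewrite big_nil -g0; congr g; apply: funext => j; by rewrite big_nil.
  rewrite big_cons -IH -[g (F a)]scale1r -hg; congr g; apply: funext => j.
  by rewrite big_cons mul1r.
have E : e y = (fun j => \sum_(i < n) e y i * (i == j)%:R).
  apply: funext => j; rewrite (bigD1 j) //= eqxx mulr1 big1 ?addr0 //.
  by move=> i /negbTE ->; rewrite mulr0.
rewrite -{1}(he y) {1}E (gS _ (fun i j => e y i * (i == j)%:R)); apply: eq_bigr => i _; by rewrite gZ.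
Qed.

Unset Implicit Arguments.


Theorem theorem7p4 (k : comPzRingType) (P P' Q' : lmodType k)
  (ev : Q' -> P' -> k^o) (A B : algType k) (iota : B -> A)
  (nuA : A -> A) (nuB : B -> B) (beta : B -> B)
  (W : lmodType k) (t : B -> Q' -> P -> W)
  (lW : B -> W -> W) (rW : W -> B -> W) :
  invertible_kmod P -> invertible_kmod P' ->
  is_dual ev ->
  P_Frobenius A P -> P_Frobenius B P' ->
  kalg_mor iota -> injective iota ->
  fgproj_right iota ->
  nakayama_aut P nuA ->
  (forall b, exists b', nuA (iota b) = iota b') ->
  (forall b', exists b, nuA (iota b) = iota b') ->
  nakayama_aut P' nuB ->
  (forall b c, iota c = nuA (iota b) -> beta c = nuB b) ->
  is_tensor3 t ->
  (forall b, {morph lW b : x y / x + y}) ->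
  (forall b, {morph rW ^~ b : x y / x + y}) ->
  (forall b x q p, lW b (t x q p) = t (beta b * x) q p) ->
  (forall b x q p, rW (t x q p) b = t (x * b) q p) ->
  W_Frobenius_ext iota lW rW.
Proof.
move=> _ [Q0 [m0 tm0]] [[evl1 evl2] [evinj evsurj]] _ [[n [e [g [he [hg hge]]]]] _]
  [iotal [iotaM iota1]] _ fgr
  [phA [[phAl [phAinj phAsurj]] [_ nakA]]] _ nuAsurj
  [phB [[phBl [phBinj phBsurj]] [_ nakB]]] betaE t3 lWD rWD lWt rWt.
have [[m0l1 m0l2] m0U] := tm0.
have [J J1] : exists J : seq (P' * Q'), \sum_(j <- J) ev j.2 j.1 = 1.
  have [s s1] := span2 tm0 1.
  have kap : forall z : Q0, exists q, forall p, m0 p z = ev q p.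
    by move=> z; apply: evsurj; apply: m0l2.
  exists [seq (u.1, projT1 (cid (kap u.2))) | u <- s].
  rewrite big_map s1; apply: eq_bigr => u _ /=.
  by case: cid => q /= ->.
have theta : forall b : P', exists tb : P', forall (pi : P') z, m0 b z *: pi = m0 pi z *: tb.
  move=> b.
  have gb : kbilin (fun (pi : P') (z : Q0) => m0 b z *: pi).
    split.
      move=> pi r u v /=; rewrite (klinD (m0l1 b)) (klinZ (m0l1 b)) scalerDl scalerA //.
    move=> z r u v /=; rewrite scalerDr !scalerA mulrC //.
  have [[h [hl hh]] _] := m0U P' _ gb.
  exists (h 1) => pi z; rewrite -hh.
  have hZ := klinZ hl (m0 pi z) 1.
  have e1 : (m0 pi z *: (1 : k^o)) = m0 pi z := mulr1 _.
  by rewrite e1 in hZ.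
have nondeg : forall y : P', (forall z, m0 y z = 0) -> y = 0.
  move=> y hy; have [s s1] := span2 tm0 1.
  rewrite -[y]scale1r s1 scaler_suml big1 // => u _.
  have [tb htb] := theta u.1; by rewrite htb hy scale0r.
have endk : forall rho : P' -> P', klin rho -> exists s : k, forall pi, rho pi = s *: pi.
  move=> rho rl.
  have gr : kbilin (fun (pi : P') (z : Q0) => m0 (rho pi) z).
    split; first by move=> pi; apply: m0l1.
    move=> z r u v /=; rewrite (klinD rl) (klinZ rl); exact: m0l2.
  have [[h [hl hh]] _] := m0U k^o _ gr.
  exists (h 1) => pi; apply/eqP; rewrite -subr_eq0; apply/eqP; apply: nondeg => z.
  rewrite (klinB (m0l2 z)) -hh (klinZ (m0l2 z)).
  have hZ := klinZ hl (m0 pi z) 1.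
  have e1 : (m0 pi z *: (1 : k^o)) = m0 pi z := mulr1 _.
  rewrite e1 in hZ; rewrite hZ.
  by rewrite [_ *: _]mulrC subrr.
have [[t1 [t2 t3l]] tU] := t3.
have tg : ktrilin (fun (x : B) (q : Q') (p : P) => ev q (phB x) *: p).
  split; [|split].
  - move=> q p r u v /=.
    by rewrite (klinD phBl) (klinZ phBl) (klinD (evl1 q)) (klinZ (evl1 q)) scalerDl scalerA.
  - move=> x p r u v /=.
    by rewrite (klinD (evl2 _)) (klinZ (evl2 _)) scalerDl scalerA.
  - move=> x q r u v /=.
    by rewrite scalerDr !scalerA mulrC.
have [[mu [mul muE]] _] := tU P _ tg.
have [X hX] : exists X : 'I_n -> P' -> B, forall i p y, phB (X i p * y) = e y i *: p.
  have ex : forall i p, exists x, forall y, e y i *: p = phB (x * y).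
    move=> i p; apply: phBsurj => r u v; rewrite he scalerDl scalerA //.
  exists (fun i p => projT1 (cid (ex i p))) => i p y; by case: cid => x /= <-.
pose bet i := g (fun j => (i == j)%:R).
have dec := fg_decomp hg hge.
pose Lam (G : B -> P) : W := \sum_(i < n) \sum_(j <- J) t (X i j.1) j.2 (G (bet i)).
have K2 : forall G, klin G -> forall c, mu (rW (Lam G) c) = G c.
  move=> G Gl c.
  rewrite /Lam (morph_sum _ _ (rWD c)) (klin_sum mul).
  rewrite {2}(dec c) (klin_sum Gl).
  apply: eq_bigr => i _.
  rewrite (morph_sum _ _ (rWD c)) (klin_sum mul) (klinZ Gl).
  transitivity (e c i *: ((\sum_(j <- J) ev j.2 j.1) *: G (bet i))); last first.
    by rewrite J1 scale1r.
  rewrite scaler_suml scaler_sumr.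
  apply: eq_bigr => j _.
  rewrite rWt muE hX (klinZ (evl1 _)) scalerA //.
have LT : forall w, Lam (fun c => mu (rW w c)) = w.
  apply: (ext3 t3 (F := fun w => Lam (fun c => mu (rW w c))) (G := id)) => //.
    move=> x y; rewrite /Lam -big_split; apply: eq_bigr => i _.
    rewrite -big_split; apply: eq_bigr => j _.
    by rewrite rWD (klinD mul) (klinD (t3l _ _)).
  move=> x q p /=.
  have [sf hsf] : exists sf : P' -> k, forall p' pi, ev q pi *: p' = sf p' *: pi.
    have ex : forall p', exists s : k, forall pi, ev q pi *: p' = s *: pi.
      move=> p'; apply: endk => r u v.
      by rewrite (klinD (evl1 q)) (klinZ (evl1 q)) scalerDl scalerA.
    exists (fun p' => projT1 (cid (ex p'))) => p' pi; by case: cid.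
  have Z : forall p', \sum_(i < n) ev q (phB (x * bet i)) *: X i p' = sf p' *: x.
    move=> p'; apply: phBinj => y.
    rewrite mulr_suml (klin_sum phBl) -scalerAl (klinZ phBl) -hsf.
    rewrite {2}(dec y) mulr_sumr (klin_sum phBl) (klin_sum (evl1 q)) scaler_suml.
    apply: eq_bigr => i _.
    rewrite -scalerAl (klinZ phBl) hX scalerA -scalerAr (klinZ phBl) (klinZ (evl1 q)).
    by congr (_ *: _); exact: mulrC.
  rewrite /Lam.
  under eq_bigr => i _ do under eq_bigr => j _ do
    rewrite rWt muE (klinZ (t3l _ _)) -(klinZ (t1 _ _)).
  rewrite exchange_big /=.
  under eq_bigr => j _ do rewrite -(klin_sum (t1 _ _)) Z (klinZ (t1 _ _)) -(klinZ (t2 _ _)).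
  rewrite -(klin_sum (t2 _ _)).
  congr t; apply: evinj => pi.
  rewrite (klin_sum (evl2 pi)).
  rewrite -[RHS]mulr1 -J1 mulr_sumr.
  apply: eq_bigr => j _.
  rewrite (klinZ (evl2 pi)); transitivity (ev j.2 (ev q pi *: j.1)); last by rewrite (klinZ (evl1 _)).
  by rewrite hsf (klinZ (evl1 _)).
have K1 : forall w w', (forall c, mu (rW w c) = mu (rW w' c)) -> w = w'.
  move=> w w' h; rewrite -(LT w) -(LT w').
  have -> : (fun c => mu (rW w c)) = (fun c => mu (rW w' c)) by apply: funext.
  by [].
have R1 : forall b c w, rW (rW w b) c = rW w (b * c).
  move=> b c; apply: (ext3 t3 (F := fun w => rW (rW w b) c) (G := fun w => rW w (b * c))).
  - by move=> x y; rewrite !rWD.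
  - by move=> x y; rewrite rWD.
  - by move=> x q p; rewrite !rWt mulrA.
have R4 : forall (r : k) w, rW w (r *: 1) = r *: w.
  move=> r; apply: (ext3 t3 (F := fun w => rW w (r *: 1)) (G := fun w => r *: w)).
  - by move=> x y; rewrite rWD.
  - by move=> x y; rewrite scalerDr.
  - by move=> x q p; rewrite rWt -scalerAr mulr1 (klinZ (t1 _ _)).
have R5 : forall b b0, nuA (iota b0) = iota b ->
    forall c w, mu (rW (lW b w) c) = mu (rW w (c * b0)).
  move=> b b0 hb c.
  have hb' : beta b = nuB b0 by apply: betaE; rewrite hb.
  apply: (ext3 t3 (F := fun w => mu (rW (lW b w) c)) (G := fun w => mu (rW w (c * b0)))).
  - by move=> x y; rewrite lWD rWD (klinD mul).
  - by move=> x y; rewrite rWD (klinD mul).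
  - move=> x q p; rewrite lWt !rWt !muE hb'.
    by rewrite -mulrA -nakB !mulrA.
have [Psi hPsi] : exists Psi : A -> A -> W,
    forall a x c, mu (rW (Psi a x) c) = phA (a * x * iota c).
  exists (fun a x => Lam (fun c => phA (a * x * iota c))) => a x c.
  apply: K2 => r u v.
  by rewrite (klinD iotal) (klinZ iotal) mulrDr -scalerAr (klinD phAl) (klinZ phAl).
split; first exact: fgr.
exists Psi; split; [|split; [|split; [|split; [|split; [|split]]]]].
- move=> a x y; apply: K1 => c.
  by rewrite rWD (klinD mul) !hPsi mulrDr mulrDl (klinD phAl).
- move=> a x b; apply: K1 => c.
  by rewrite R1 !hPsi iotaM !mulrA.
- move=> a a' x; apply: K1 => c.
  by rewrite rWD (klinD mul) !hPsi !mulrDl (klinD phAl).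
- move=> b a x; have [b0 hb0] := nuAsurj b; apply: K1 => c.
  rewrite (R5 _ _ hb0) !hPsi iotaM [in RHS]mulrA [in RHS]nakA hb0.
  by rewrite !mulrA.
- move=> a c x; apply: K1 => d.
  by rewrite !hPsi !mulrA.
- move=> a a' h; apply: phAinj => x.
  have e1 := hPsi a x 1; have e2 := hPsi a' x 1.
  rewrite h e2 iota1 !mulr1 in e1.
  by rewrite e1.
- move=> f fD fR.
  have fl : klin (fun x => mu (f x)).
    move=> r u v.
    have eu : r *: u = u * iota (r *: 1) by rewrite (klinZ iotal) iota1 -scalerAr mulr1.
    by rewrite fD eu fR R4 (klinD mul) (klinZ mul).
  have [a ha] := phAsurj _ fl.
  exists a => x; apply: K1 => c.
  by rewrite hPsi -fR ha mulrA.
Qed.
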